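(* Let $G=(V_G,E_G)$ be a graph with $N$ vertices, $g\ge0$, and $H$ the transverse-field Ising Hamiltonian on $G$. Then $$\min_{|\varphi\rangle\text{ stabilizer state}}\langle\varphi|H|\varphi\rangle=\min_{n\in\{0,1,\dots,N\}}\big(-\mathcal{E}(n)-g(N-n)\big).$$ Moreover, any vertex set $V$ minimizing $f(S)=-|E(S)|-g|V_G\setminus S|$ over $S\subseteq V_G$ is an $n$-optimal vertex set for $n=|V|$.
   Context: A graph $G=(V_G,E_G)$ is finite, simple and undirected, with $V_G=\{q_0,\dots,q_{N-1}\}$, vertex $q_i$ corresponding to qubit $i$. For $S\subseteq V_G$, $E(S)$ is the set of edges with both endpoints in $S$. The transverse-field Ising Hamiltonian on $G$ is $H=-\sum_{\langle q_i,q_j\rangle\in E_G}Z_iZ_j-g\sum_{q_i\in V_G}X_i$; stabilizer states are $N$-qubit states whose stabilizer group consists of $2^N$ Pauli-group elements. The edge-function is $\mathcal{E}(n)=\max\{|E(S)|: S\subseteq V_G,\ |S|\le n\}$ for $0\le n\le N$ (so $\mathcal{E}(0)=\mathcal{E}(1)=0$). A set $S\subseteq V_G$ with $|S|\le n$ and $|E(S)|=\mathcal{E}(n)$ is called an $n$-optimal vertex set. *)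

(* Defs.v *)
From HB Require Import structures.
From mathcomp Require Import all_boot all_order all_algebra.
From mathcomp Require Import complex.
Set Implicit Arguments. Unset Strict Implicit. Unset Printing Implicit Defensive.
Import Order.TTheory GRing.Theory Num.Theory.
Local Open Scope ring_scope.

Section Defs.
Variable R : rcfType.
Local Notation C := R[i].

(* Qubits are indexed by 'I_N; computational basis states of N qubits by
   'I_(2^N); bit j of basis index k is the state of qubit j. *)
Definition qbit (N : nat) (k : 'I_(2 ^ N)) (j : 'I_N) : bool := odd (k %/ 2 ^ j).

(* single-qubit Pauli matrices sigma_0 = I, sigma_1 = X, sigma_2 = Y,
   sigma_3 = Z, as functions of (row bit, column bit). *)
Definition sigma (a : 'I_4) (r c : bool) : C :=
  match val a with
  | 0 => if r == c then 1 else 0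
  | 1 => if r == c then 0 else 1
  | 2 => if r == c then 0 else (if r then 'i else - 'i)%C
  | _ => if r == c then (if r then -1 else 1) else 0
  end.

(* Pauli string sigma_{p 0} (x) ... (x) sigma_{p (N-1)} (tensor product,
   written entrywise). *)
Definition pauli_string N (p : {ffun 'I_N -> 'I_4}) : 'M[C]_(2 ^ N) :=
  \matrix_(r, c) \prod_(j < N) sigma (p j) (qbit r j) (qbit c j).

Definition pauli_elt N (q : 'I_4 * {ffun 'I_N -> 'I_4}) : 'M[C]_(2 ^ N) :=
  ('i%C ^+ q.1) *: pauli_string q.2.

Definition bra N (phi : 'cV[C]_(2 ^ N)) : 'rV[C]_(2 ^ N) :=
  (map_mx (fun z : C => (z ^*)%C) phi)^T.

Definition is_state N (phi : 'cV[C]_(2 ^ N)) : Prop :=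
  (bra phi *m phi) 0 0 = 1.

Definition stab_group N (phi : 'cV[C]_(2 ^ N)) : {set 'I_4 * {ffun 'I_N -> 'I_4}} :=
  [set q | pauli_elt q *m phi == phi].

Definition stabilizer_state N (phi : 'cV[C]_(2 ^ N)) : Prop :=
  is_state phi /\ #|stab_group phi| = (2 ^ N)%N.

Definition expval N (H : 'M[C]_(2 ^ N)) (phi : 'cV[C]_(2 ^ N)) : C :=
  (bra phi *m H *m phi) 0 0.

Definition ZZ N (i j : 'I_N) : {ffun 'I_N -> 'I_4} :=
  [ffun k => if (k == i) || (k == j) then inord 3 else inord 0].
Definition Xat N (i : 'I_N) : {ffun 'I_N -> 'I_4} :=
  [ffun k => if k == i then inord 1 else inord 0].

(* The transverse-field Ising Hamiltonian on the graph with adjacency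
   relation adj on vertex set 'I_N; each edge {i,j} is counted once (i < j). *)
Definition tfim N (adj : rel 'I_N) (g : R) : 'M[C]_(2 ^ N) :=
  - (\sum_(i < N) \sum_(j < N | (i < j)%N && adj i j) pauli_string (ZZ i j))
  - (g%:C)%C *: (\sum_(i < N) pauli_string (Xat i)).

End Defs.

Definition simple_graph N (adj : rel 'I_N) : Prop :=
  symmetric adj /\ irreflexive adj.

Definition edges_in N (adj : rel 'I_N) (S : {set 'I_N}) : {set 'I_N * 'I_N} :=
  [set e : 'I_N * 'I_N | [&& (e.1 < e.2)%N, adj e.1 e.2, e.1 \in S & e.2 \in S]].

Definition edge_fun N (adj : rel 'I_N) (n : nat) : nat :=
  \max_(S : {set 'I_N} | (#|S| <= n)%N) #|edges_in adj S|.

Definition n_optimal N (adj : rel 'I_N) (n : nat) (S : {set 'I_N}) : Prop :=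
  (#|S| <= n)%N /\ #|edges_in adj S| = edge_fun adj n.

Definition fcost (R : rcfType) N (adj : rel 'I_N) (g : R) (S : {set 'I_N}) : R :=
  - (#|edges_in adj S|)%:R - g * (#|~: S|)%:R.

Definition rhs_min (R : rcfType) N (adj : rel 'I_N) (g : R) : R :=
  \big[Order.min/(- (edge_fun adj 0)%:R - g * N%:R)]_(n < N.+1)
     (- (edge_fun adj n)%:R - g * (N - n)%:R).

(* Main.v *)
Require Import Defs.
From HB Require Import structures.
From mathcomp Require Import all_boot all_order all_algebra.
From mathcomp Require Import complex ring.
Set Implicit Arguments. Unset Strict Implicit. Unset Printing Implicit Defensive.
Import Order.TTheory GRing.Theory Num.Theory.
Local Open Scope ring_scope.

Lemma bits_sum_nat (N k : nat) : (k < 2 ^ N)%N ->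
  k = (\sum_(j < N) odd (k %/ 2 ^ j) * 2 ^ j)%N.
Proof.
elim: N k => [|N IH] k hk.
  by rewrite big_ord0; move: hk; rewrite expn0; case: k.
rewrite big_ord_recl /= expn0 divn1 muln1.
have h2 : (k %/ 2 < 2 ^ N)%N by rewrite ltn_divLR // -expnSr.
rewrite -[X in X = _]odd_double_half; congr addn.
rewrite -divn2 {1}(IH _ h2) -muln2 big_distrl /=; apply: eq_bigr => j _.
by rewrite /bump /= add1n expnS divnMA [(2 * _)%N]mulnC mulnA.
Qed.

Lemma qbit_inj N (r c : 'I_(2 ^ N)) : (forall j, qbit r j = qbit c j) -> r = c.
Proof.
move=> h; apply: val_inj => /=.
rewrite (bits_sum_nat (ltn_ord r)) (bits_sum_nat (ltn_ord c)).
by apply: eq_bigr => j _; have := h j; rewrite /qbit => ->.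
Qed.

Definition bitsf N (k : 'I_(2 ^ N)) : {ffun 'I_N -> bool} := [ffun j => qbit k j].

Lemma bitsf_bij N : bijective (@bitsf N).
Proof.
apply: inj_card_bij.
  by move=> a b /ffunP h; apply: qbit_inj => j; have := h j; rewrite !ffunE.
by rewrite card_ffun card_bool card_ord !card_ord.
Qed.

Lemma sum_bits (R : comNzRingType) N (F : 'I_N -> bool -> R) :
  \sum_(k < 2 ^ N) \prod_(j < N) F j (qbit k j) = \prod_(j < N) \sum_(b : bool) F j b.
Proof.
rewrite bigA_distr_bigA /= (reindex (@bitsf N)) /=.
  by apply: eq_bigr => k _; apply: eq_bigr => j _; rewrite ffunE.
by apply: onW_bij; apply: bitsf_bij.
Qed.
Section S.
Variable R : rcfType.
Local Notation C := R[i].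
Local Notation sig := (sigma R).
Local Notation PS := (pauli_string R).
Local Notation cj := (@conjc R).

Lemma sigma_orth (r c r' c' : bool) :
  \sum_(x : 'I_4) sig x r c * cj (sig x r' c') = if (r == r') && (c == c') then 2 else 0.
Proof.
rewrite !big_ord_recl big_ord0 /sigma /=.
by case: r; case: c; case: r'; case: c'; rewrite /= ?conjc0 ?conjc1 ?rmorphN ?conjc1 /=;
  apply/eqP; rewrite eq_complex /= ; simpc.
Qed.

Lemma qbit_neq N (a c : 'I_(2 ^ N)) : a != c -> exists j, qbit a j != qbit c j.
Proof.
move=> h; apply/existsP; apply: contraR h => /existsPn h.
by apply/eqP; apply: qbit_inj => j; apply/eqP/negPn/h.
Qed.

Lemma prod_ite N (a c b d : 'I_(2 ^ N)) :
  \prod_(j < N) (if (qbit a j == qbit c j) && (qbit b j == qbit d j) then 2 else 0 : C)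
  = if (a == c) && (b == d) then (2 ^ N)%:R else 0.
Proof.
case: eqP => [->|/eqP hac].
  case: eqP => [->|/eqP hbd].
    by rewrite /= (eq_bigr (fun _ => 2)) ?prodr_const ?card_ord ?natrX // => j _; rewrite !eqxx.
  have [j hj] := qbit_neq hbd.
  by rewrite (bigD1 j) //= (negbTE hj) andbF mul0r.
have [j hj] := qbit_neq hac.
by rewrite (bigD1 j) //= (negbTE hj) mul0r.
Qed.

Lemma ps_orth N (a b c d : 'I_(2 ^ N)) :
  \sum_(p : {ffun 'I_N -> 'I_4}) PS p a b * cj (PS p c d)
  = if (a == c) && (b == d) then (2 ^ N)%:R else 0.
Proof.
transitivity (\sum_(p : {ffun 'I_N -> 'I_4}) \prod_(j < N)
   (sig (p j) (qbit a j) (qbit b j) * cj (sig (p j) (qbit c j) (qbit d j)))).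
  by apply: eq_bigr => p _; rewrite !mxE rmorph_prod -big_split.
rewrite -(bigA_distr_bigA (fun (j : 'I_N) (x : 'I_4) =>
   sig x (qbit a j) (qbit b j) * cj (sig x (qbit c j) (qbit d j)))) /=.
rewrite -prod_ite; apply: eq_bigr => j _; exact: sigma_orth.
Qed.

Lemma expvalE N (H : 'M[C]_(2 ^ N)) phi :
  expval H phi = \sum_a \sum_b cj (phi a 0) * H a b * phi b 0.
Proof.
rewrite /expval /bra mxE.
under eq_bigr do rewrite mxE big_distrl.
rewrite exchange_big; apply: eq_bigr => a _; apply: eq_bigr => b _.
by rewrite !mxE.
Qed.

Lemma stateE N (phi : 'cV[C]_(2 ^ N)) : is_state phi ->
  \sum_a cj (phi a 0) * phi a 0 = 1.
Proof.
rewrite /is_state /bra mxE => <-; apply: eq_bigr => a _; by rewrite !mxE.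
Qed.

Lemma sum_delta (T : finType) (F : T -> T -> C) (a b : T) k :
  \sum_c \sum_d F c d * (if (a == c) && (b == d) then k else 0) = F a b * k.
Proof.
rewrite (bigD1 a) //= [X in _ + X]big1; last first.
  by move=> c hc; apply: big1 => d _; rewrite eq_sym (negbTE hc) /= mulr0.
rewrite addr0 (bigD1 b) //= [X in _ + X]big1; last first.
  by move=> d hd; rewrite eqxx eq_sym (negbTE hd) mulr0.
by rewrite !eqxx addr0.
Qed.

Lemma parseval N (phi : 'cV[C]_(2 ^ N)) : is_state phi ->
  \sum_(p : {ffun 'I_N -> 'I_4}) expval (PS p) phi * cj (expval (PS p) phi) = (2 ^ N)%:R.
Proof.
move=> hs.
pose x a := phi a 0.
transitivity (\sum_(p : {ffun 'I_N -> 'I_4}) \sum_a \sum_b \sum_c \sum_d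
   (cj (x a) * x b * (x c * cj (x d))) * (PS p a b * cj (PS p c d))).
  have hc (f : 'I_(2 ^ N) -> 'I_(2 ^ N) -> C) :
      cj (\sum_c \sum_d f c d) = \sum_c \sum_d cj (f c d).
    by rewrite rmorph_sum; apply: eq_bigr => c _; rewrite rmorph_sum.
  apply: eq_bigr => p _; rewrite expvalE hc big_distrl; apply: eq_bigr => a _.
  rewrite big_distrl; apply: eq_bigr => b _.
  rewrite big_distrr; apply: eq_bigr => c _.
  rewrite big_distrr; apply: eq_bigr => d _.
  rewrite !(fst (conjc_is_multiplicative R)) conjcK /x /=; ring.
transitivity (\sum_a \sum_b \sum_c \sum_d
   (cj (x a) * x b * (x c * cj (x d))) * (if (a == c) && (b == d) then (2 ^ N)%:R else 0)).
  rewrite exchange_big; apply: eq_bigr => a _.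
  rewrite exchange_big; apply: eq_bigr => b _.
  rewrite exchange_big; apply: eq_bigr => c _.
  rewrite exchange_big; apply: eq_bigr => d _.
  by rewrite -big_distrr ps_orth.
under eq_bigr do under eq_bigr do rewrite sum_delta.
transitivity ((\sum_a cj (x a) * x a) * (\sum_b cj (x b) * x b) * (2 ^ N)%:R).
  rewrite !big_distrl; apply: eq_bigr => a _; rewrite big_distrr big_distrl.
  by apply: eq_bigr => b _ /=; ring.
by rewrite stateE // !mul1r.
Qed.

Definition mul1 (a b : 'I_4) (r c : bool) : C := \sum_(x : bool) sig a r x * sig b x c.

Lemma ps_mul N (p q : {ffun 'I_N -> 'I_4}) :
  PS p *m PS q = \matrix_(r, c) \prod_(j < N) mul1 (p j) (q j) (qbit r j) (qbit c j).
Proof.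
apply/matrixP => r c; rewrite !mxE.
under eq_bigr do rewrite !mxE -big_split /=.
exact: (sum_bits (fun j b => sig (p j) (qbit r j) b * sig (q j) b (qbit c j))).
Qed.

Ltac case4 a := let n := fresh in let H := fresh in
  case: a => [[|[|[|[|n]]]] H]; [ | | | | by exfalso; move: H; rewrite !ltnS ltn0].

Lemma mul1_sq (a : 'I_4) r c : mul1 a a r c = if r == c then 1 else 0.
Proof.
rewrite /mul1 big_bool /sigma.
case4 a; by case: r; case: c => /=; apply/eqP; rewrite eq_complex /=; simpc.
Qed.

Lemma inord4 n (h : (n < 4)%N) : (inord n : 'I_4) = Ordinal h.
Proof. by apply: val_inj; rewrite /= inordK. Qed.

Lemma mul1_0l (a : 'I_4) r c : mul1 (inord 0) a r c = mul1 a (inord 0) r c.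
Proof.
rewrite /mul1 !big_bool (inord4 (isT : (0 < 4)%N)) /sigma.
case4 a; by case: r; case: c => /=; apply/eqP; rewrite eq_complex /=; simpc.
Qed.

Lemma mul1_13 r c : mul1 (inord 1) (inord 3) r c = - mul1 (inord 3) (inord 1) r c.
Proof.
rewrite /mul1 !big_bool (inord4 (isT : (1 < 4)%N)) (inord4 (isT : (3 < 4)%N)) /sigma.
by case: r; case: c => /=; apply/eqP; rewrite eq_complex /=; simpc.
Qed.

Lemma ps_sq N (p : {ffun 'I_N -> 'I_4}) : PS p *m PS p = 1%:M.
Proof.
rewrite ps_mul; apply/matrixP => r c; rewrite !mxE.
under eq_bigr do rewrite mul1_sq.
case: eqP => [->|/eqP hrc].
  by apply: big1 => j _; rewrite eqxx.
have [j hj] := qbit_neq hrc.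
by rewrite (bigD1 j) //= (negbTE hj) mul0r.
Qed.

Lemma ps_anti N (p q : {ffun 'I_N -> 'I_4}) (k : 'I_N) :
  p k = inord 1 -> q k = inord 3 -> (forall l, l != k -> p l = inord 0) ->
  PS p *m PS q = - (PS q *m PS p).
Proof.
move=> pk qk pl; rewrite !ps_mul; apply/matrixP => r c; rewrite !mxE.
rewrite (bigD1 k) //= [in RHS](bigD1 k) //= pk qk mul1_13 mulNr; congr (- (_ * _)).
by apply: eq_bigr => l hl; rewrite pl // mul1_0l.
Qed.

Lemma i_neq0 : ('i%C : C) != 0.
Proof. by rewrite eq_complex /= oner_eq0 andbF. Qed.

Lemma N1_neq1 : (-1 : R) != 1.
Proof.
apply/eqP => h; have : (2%:R : R) == 0 by rewrite mulr2n -{1}h addNr.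
by rewrite pnatr_eq0.
Qed.

Lemma i_pow_inj (m m' : 'I_4) : ('i%C : C) ^+ m = 'i%C ^+ m' -> m = m'.
Proof.
move=> h; apply: val_inj; move: h => /=.
case4 m; case4 m'; rewrite /= ?expr0 ?exprS ?expr0 => /eqP; rewrite eq_complex /=; simpc;
  rewrite ?eqxx ?oner_eq0 ?(eq_sym 0 1) ?oner_eq0 /= //;
  rewrite ?add0r ?andbF ?oner_eq0 ?(negbTE N1_neq1) ?(eq_sym 1 (-1)) ?(negbTE N1_neq1)
    ?oppr_eq0 ?(eq_sym 0 (-1)) ?oppr_eq0 ?oner_eq0 //.
Qed.

Lemma stab_eig N (phi : 'cV[C]_(2 ^ N)) (m : 'I_4) p :
  (m, p) \in stab_group phi -> PS p *m phi = (('i%C : C) ^+ m)^-1 *: phi.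
Proof.
rewrite inE /pauli_elt /= => /eqP h.
by rewrite -{2}h -scalemxAl scalerA mulVf ?scale1r // expf_neq0 // i_neq0.
Qed.

Lemma expval_eig N (A : 'M[C]_(2 ^ N)) phi k :
  is_state phi -> A *m phi = k *: phi -> expval A phi = k.
Proof.
rewrite /expval -mulmxA => hs ->; by rewrite -scalemxAr mxE hs mulr1.
Qed.

Lemma expval_mulr N (A B : 'M[C]_(2 ^ N)) phi k :
  A *m phi = k *: phi -> expval (B *m A) phi = k * expval B phi.
Proof.
rewrite /expval => h; by rewrite mulmxA -mulmxA h -scalemxAr mxE.
Qed.

Lemma stab_norm N (phi : 'cV[C]_(2 ^ N)) (m : 'I_4) p : is_state phi ->
  (m, p) \in stab_group phi -> expval (PS p) phi * cj (expval (PS p) phi) = 1.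
Proof.
move=> hs /stab_eig h; rewrite (expval_eig hs h).
rewrite conjc_inv (rmorphXn (@conjc R)) -invfM -exprMn.
suff -> : ('i%C * cj 'i%C : C) = 1 by rewrite expr1n invr1.
by apply/eqP; rewrite eq_complex /=; simpc.
Qed.

Definition simg N (phi : 'cV[C]_(2 ^ N)) : {set {ffun 'I_N -> 'I_4}} :=
  [set q.2 | q in stab_group phi].

Lemma simg_card N (phi : 'cV[C]_(2 ^ N)) : stabilizer_state phi -> #|simg phi| = (2 ^ N)%N.
Proof.
move=> [hs hc]; rewrite card_in_imset ?hc // => -[m p] [m' p'] h h' /= e; subst p'.
have e1 := expval_eig hs (stab_eig h); have e2 := expval_eig hs (stab_eig h').
rewrite e1 in e2; by move/invr_inj: e2 => /i_pow_inj ->.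
Qed.

Lemma stab_zero N (phi : 'cV[C]_(2 ^ N)) p : stabilizer_state phi ->
  p \notin simg phi -> expval (PS p) phi = 0.
Proof.
move=> hst hp; have [hs hc] := hst.
have := parseval hs; rewrite (bigID (fun p => p \in simg phi)) /=.
have -> : \sum_(p in simg phi) expval (PS p) phi * cj (expval (PS p) phi) = (2 ^ N)%:R.
  rewrite -(simg_card hst) -sumr_const; apply: eq_bigr => q /imsetP [[m p'] hq ->].
  exact: stab_norm hq.
move=> h; have h0 : \sum_(p | p \notin simg phi) expval (PS p) phi * cj (expval (PS p) phi) = 0.
  by apply: (addrI (2 ^ N)%:R); rewrite addr0.
move: (psumr_eq0P (fun p _ => mulcJ_ge0 _) h0 hp) => /eqP.
by rewrite mulf_eq0 conjc_eq0 orbb => /eqP.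
Qed.

Lemma ev_cases N (phi : 'cV[C]_(2 ^ N)) p : stabilizer_state phi ->
  expval (PS p) phi = 0 \/
  ((expval (PS p) phi = 1 \/ expval (PS p) phi = -1) /\
   PS p *m phi = expval (PS p) phi *: phi).
Proof.
move=> hst; have [hs hc] := hst.
case: (boolP (p \in simg phi)) => hp; last by left; apply: stab_zero.
right; case/imsetP: hp => [[m p'] hq /= ->].
have h := stab_eig hq; rewrite (expval_eig hs h); split => //.
set w := _^-1 in h *.
have : w ^+ 2 = 1.
  have e1 : expval (PS p' *m PS p') phi = w * w by rewrite (expval_mulr _ h) (expval_eig hs h).
  have e2 : expval (PS p' *m PS p') phi = 1 by rewrite ps_sq /expval mulmx1.
  by rewrite expr2 -e1 e2.
by move/eqP; rewrite sqrf_eq1 => /orP [] /eqP; auto.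
Qed.

Lemma expvalD N (A B : 'M[C]_(2 ^ N)) phi : expval (A + B) phi = expval A phi + expval B phi.
Proof. by rewrite /expval mulmxDr mulmxDl mxE. Qed.
Lemma expvalN N (A : 'M[C]_(2 ^ N)) phi : expval (- A) phi = - expval A phi.
Proof. by rewrite /expval mulmxN mulNmx mxE. Qed.
Lemma expvalZ N (A : 'M[C]_(2 ^ N)) k phi : expval (k *: A) phi = k * expval A phi.
Proof. by rewrite /expval -scalemxAr -scalemxAl mxE. Qed.
Lemma expval0 N (phi : 'cV[C]_(2 ^ N)) : expval 0 phi = 0.
Proof. by rewrite /expval mulmx0 mul0mx mxE. Qed.
Lemma expval_sum N (I : finType) (P : pred I) (F : I -> 'M[C]_(2 ^ N)) phi :
  expval (\sum_(i | P i) F i) phi = \sum_(i | P i) expval (F i) phi.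
Proof.
exact: (big_morph (fun A => expval A phi) (fun A B => expvalD A B phi) (expval0 phi)).
Qed.

Lemma anti_zero N (phi : 'cV[C]_(2 ^ N)) p q : stabilizer_state phi ->
  PS p *m PS q = - (PS q *m PS p) ->
  expval (PS p) phi = 0 \/ expval (PS q) phi = 0.
Proof.
move=> hst hpq.
case: (ev_cases p hst) => [|[ha hA]]; first by left.
case: (ev_cases q hst) => [|[hb hB]]; first by right.
set a := expval (PS p) phi in ha hA; set b := expval (PS q) phi in hb hB.
have e1 := expval_mulr (PS p) hB; have e2 := expval_mulr (PS q) hA.
rewrite hpq expvalN e2 -/a -/b in e1.
have hab : a * b != 0.
  by rewrite mulf_neq0 //; [case: ha => ->|case: hb => ->]; rewrite ?oner_eq0 ?oppr_eq0 ?oner_eq0.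
exfalso; move: hab; rewrite mulrC.
have : (b * a) *+ 2 == 0 by rewrite mulr2n -{1}e1 (mulrC b a) addNr.
by rewrite -mulr_natr mulf_eq0 pnatr_eq0 orbF => ->.
Qed.

Lemma expval_tfim N (adj : rel 'I_N) g phi :
  expval (tfim adj g) phi =
  - (\sum_(i < N) \sum_(j < N | (i < j)%N && adj i j) expval (PS (ZZ i j)) phi)
  - (g%:C)%C * \sum_(i < N) expval (PS (Xat i)) phi.
Proof.
rewrite /tfim expvalD !expvalN expvalZ !expval_sum; congr (- _ - _).
by apply: eq_bigr => i _; rewrite expval_sum.
Qed.

Lemma card_edges N (adj : rel 'I_N) (S : {set 'I_N}) :
  #|edges_in adj S| = (\sum_(i < N) \sum_(j < N | (i < j)%N && adj i j) ((i \in S) && (j \in S)))%N.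
Proof.
transitivity (\sum_i \sum_j (if (i, j) \in edges_in adj S then 1 else 0))%N.
  rewrite -sum1_card big_mkcond pair_bigA /=.
  by apply: congr_big => // -[i j]; rewrite !inE.
apply: eq_bigr => i _; rewrite [in RHS]big_mkcond /=; apply: eq_bigr => j _.
by rewrite inE /=; case: ((i < j)%N); case: (adj i j); case: (i \in S); case: (j \in S).
Qed.

Lemma pm1_le1 (x : C) : x = 1 \/ x = -1 -> x <= 1.
Proof. by case=> ->; rewrite ?lexx // (le_trans (lerN10 _)) ?ler01. Qed.

Lemma pm1_neq0 (x : C) : x = 1 \/ x = -1 -> x != 0.
Proof. by case=> ->; rewrite ?oppr_eq0 oner_eq0. Qed.

Lemma anti_X_ZZ N (i j : 'I_N) : i != j ->
  PS (Xat i) *m PS (ZZ i j) = - (PS (ZZ i j) *m PS (Xat i)).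
Proof.
move=> hij; apply: (@ps_anti _ _ _ i); rewrite ?ffunE ?eqxx //.
by move=> l /negbTE hl; rewrite ffunE hl.
Qed.

Lemma anti_X_ZZ' N (i j : 'I_N) : i != j ->
  PS (Xat j) *m PS (ZZ i j) = - (PS (ZZ i j) *m PS (Xat j)).
Proof.
move=> hij; apply: (@ps_anti _ _ _ j); rewrite ?ffunE ?eqxx ?orbT //.
by move=> l /negbTE hl; rewrite ffunE hl.
Qed.

Lemma lower_bound N (adj : rel 'I_N) (g : R) (phi : 'cV[C]_(2 ^ N)) :
  0 <= g -> stabilizer_state phi ->
  exists S, ((fcost adj g S)%:C)%C <= expval (tfim adj g) phi.
Proof.
move=> hg hst.
pose T := [set i | expval (PS (Xat i)) phi != 0].
exists (~: T).
rewrite expval_tfim /fcost rmorphB rmorphM !rmorphN !rmorph_nat setCK.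
apply: lerB; first rewrite lerN2.
  rewrite card_edges natr_sum; apply: ler_sum => i _; rewrite natr_sum.
  rewrite big_mkcond [X in _ <= X]big_mkcond /=; apply: ler_sum => j _.
  case: ifP => [/andP [hij _]|_]; last by [].
  case: (ev_cases (ZZ i j) hst) => [->|[hpm _]]; first by rewrite ler0n.
  have hne : i != j by rewrite neq_ltn hij.
  have hi : i \in ~: T.
    rewrite !inE negbK; apply/eqP.
    by case: (anti_zero hst (anti_X_ZZ hne)) => // /eqP; rewrite (negbTE (pm1_neq0 hpm)).
  have hj : j \in ~: T.
    rewrite !inE negbK; apply/eqP.
    by case: (anti_zero hst (anti_X_ZZ' hne)) => // /eqP; rewrite (negbTE (pm1_neq0 hpm)).
  by rewrite hi hj; apply: pm1_le1.
have hg' : 0 <= (g%:C)%C :> C by rewrite ler0c.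
apply: ler_wpM2l => //.
rewrite -sum1_card natr_sum [X in _ <= X]big_mkcond /=; apply: ler_sum => i _.
rewrite inE; case: (ev_cases (Xat i) hst) => [->|[hpm _]]; first by case: ifP.
by rewrite (pm1_neq0 hpm); apply: pm1_le1.
Qed.

Definition hc : C := ((Num.sqrt (2 : R))^-1)%:C%C.

Lemma hc_conj : cj hc = hc.
Proof. exact: conjc_real. Qed.

Lemma hc_sq : hc * hc + hc * hc = 1.
Proof.
rewrite /hc -!rmorphM -rmorphD; congr (_%:C)%C.
rewrite -invfM -expr2 sqr_sqrtr ?ler0n //.
by field.
Qed.

Definition amp (inS b : bool) : C := if inS then (if b then 0 else 1) else hc.

Definition pstate N (S : {set 'I_N}) : 'cV[C]_(2 ^ N) :=
  \matrix_(k, _) \prod_(j < N) amp (j \in S) (qbit k j).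

Definition single (a : 'I_4) (inS : bool) : C :=
  \sum_(x : bool) \sum_(y : bool) cj (amp inS x) * sig a x y * amp inS y.

Lemma expval_pstate N (S : {set 'I_N}) p :
  expval (PS p) (pstate S) = \prod_(j < N) single (p j) (j \in S).
Proof.
rewrite expvalE.
transitivity (\sum_(r < 2 ^ N) \prod_(j < N) \sum_(y : bool)
   cj (amp (j \in S) (qbit r j)) * sig (p j) (qbit r j) y * amp (j \in S) y).
  apply: eq_bigr => r _.
  rewrite -(sum_bits (fun j y => cj (amp (j \in S) (qbit r j)) * sig (p j) (qbit r j) y * amp (j \in S) y)).
  apply: eq_bigr => c _; rewrite !mxE rmorph_prod -!big_split /=.
  done.
exact: (sum_bits (fun j x => \sum_(y : bool) cj (amp (j \in S) x) * sig (p j) x y * amp (j \in S) y)).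
Qed.

Lemma pstate_state N (S : {set 'I_N}) : is_state (pstate S).
Proof.
rewrite /is_state /bra mxE.
transitivity (\sum_(r < 2 ^ N) \prod_(j < N) (cj (amp (j \in S) (qbit r j)) * amp (j \in S) (qbit r j))).
  by apply: eq_bigr => r _; rewrite !mxE rmorph_prod -big_split.
rewrite (sum_bits (fun j b => cj (amp (j \in S) b) * amp (j \in S) b)).
apply: big1 => j _; rewrite big_bool /amp /=.
case: (j \in S); rewrite ?conjc0 ?conjc1 ?hc_conj ?mul0r ?mulr1 ?add0r ?hc_sq //.
Qed.

Ltac fin_single := rewrite ?conjc0 ?conjc1 ?hc_conj /=;
  first [ring | (transitivity (hc * hc + hc * hc); [ring | exact: hc_sq])].

Lemma single0 b : single (inord 0) b = 1.
Proof.
rewrite /single !big_bool /= (inord4 (isT : (0 < 4)%N)) /sigma /amp /=.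
by case: b; fin_single.
Qed.

Lemma single1 b : single (inord 1) b = if b then 0 else 1.
Proof.
rewrite /single !big_bool /= (inord4 (isT : (1 < 4)%N)) /sigma /amp /=.
by case: b; fin_single.
Qed.

Lemma single3 b : single (inord 3) b = if b then 1 else 0.
Proof.
rewrite /single !big_bool /= (inord4 (isT : (3 < 4)%N)) /sigma /amp /=.
by case: b; fin_single.
Qed.

Lemma ev_pstate_X N (S : {set 'I_N}) i :
  expval (PS (Xat i)) (pstate S) = (i \notin S)%:R.
Proof.
rewrite expval_pstate (bigD1 i) //= big1 => [|k hk]; last by rewrite ffunE (negbTE hk) single0.
by rewrite ffunE eqxx single1 mulr1; case: (i \in S).
Qed.

Lemma ev_pstate_ZZ N (S : {set 'I_N}) i j : i != j ->
  expval (PS (ZZ i j)) (pstate S) = ((i \in S) && (j \in S))%:R.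
Proof.
move=> hij; rewrite expval_pstate (bigD1 i) //= (bigD1 j) /=; last by rewrite eq_sym.
rewrite big1 => [|k /andP [hki hkj]]; last by rewrite ffunE (negbTE hki) (negbTE hkj) single0.
rewrite !ffunE !eqxx orbT /= !single3 mulr1.
by case: (i \in S); case: (j \in S); rewrite ?mulr1 ?mul0r ?mulr0.
Qed.

Lemma simg_card_gen N (phi : 'cV[C]_(2 ^ N)) : is_state phi -> #|simg phi| = #|stab_group phi|.
Proof.
move=> hs; rewrite card_in_imset // => -[m p] [m' p'] h h' /= e; subst p'.
have e1 := expval_eig hs (stab_eig h); have e2 := expval_eig hs (stab_eig h').
rewrite e1 in e2; by move/invr_inj: e2 => /i_pow_inj ->.
Qed.

Lemma stab_card_le N (phi : 'cV[C]_(2 ^ N)) : is_state phi -> (#|stab_group phi| <= 2 ^ N)%N.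
Proof.
move=> hs; rewrite -simg_card_gen // -(ler_nat C).
have := parseval hs; rewrite (bigID (fun p => p \in simg phi)) /=.
have -> : \sum_(p in simg phi) expval (PS p) phi * cj (expval (PS p) phi) = #|simg phi|%:R.
  rewrite -sumr_const; apply: eq_bigr => q /imsetP [[m p'] hq ->].
  exact: stab_norm hq.
move=> <-; rewrite lerDl; apply: sumr_ge0 => p _; exact: mulcJ_ge0.
Qed.

Definition pA N (S : {set 'I_N}) (b : {ffun 'I_N -> bool}) : {ffun 'I_N -> 'I_4} :=
  [ffun j => if b j then (if j \in S then inord 3 else inord 1) else inord 0].

Lemma pstate_stab N (S : {set 'I_N}) b : PS (pA S b) *m pstate S = pstate S.
Proof.
apply/matrixP => r z; rewrite !mxE.
transitivity (\sum_(c < 2 ^ N) \prod_(j < N) (sig (pA S b j) (qbit r j) (qbit c j) * amp (j \in S) (qbit c j))).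
  by apply: eq_bigr => c _; rewrite !mxE -big_split.
rewrite (sum_bits (fun j y => sig (pA S b j) (qbit r j) y * amp (j \in S) y)).
apply: eq_bigr => j _; rewrite big_bool /= ffunE.
case: (b j); last first.
  by rewrite (inord4 (isT : (0 < 4)%N)) /sigma; case: (qbit r j); case: (j \in S); rewrite /amp /=;
    rewrite ?mul1r ?mul0r ?add0r ?addr0.
case: (j \in S).
  by rewrite (inord4 (isT : (3 < 4)%N)) /sigma; case: (qbit r j); rewrite /amp /=;
    rewrite ?mul1r ?mul0r ?mulr0 ?add0r ?addr0.
by rewrite (inord4 (isT : (1 < 4)%N)) /sigma; case: (qbit r j); rewrite /amp /=;
    rewrite ?mul1r ?mul0r ?mulr0 ?add0r ?addr0.
Qed.

Lemma pstate_stabilizer N (S : {set 'I_N}) : stabilizer_state (pstate S).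
Proof.
split; first exact: pstate_state.
apply/eqP; rewrite eqn_leq (stab_card_le (pstate_state S)) /=.
have hinj : injective (fun b => ((ord0 : 'I_4), pA S b)).
  move=> b b' [] /ffunP h; apply/ffunP => j; have := h j; rewrite !ffunE.
  case: (b j); case: (b' j) => //; case: (j \in S) => /(congr1 val) /=;
  by rewrite !inordK.
apply: (@leq_trans #|[set ((ord0 : 'I_4), pA S b) | b in [set: {ffun 'I_N -> bool}]]|).
  by rewrite card_imset // cardsT card_ffun card_bool card_ord.
apply: subset_leq_card; apply/subsetP => q /imsetP [b _ ->].
by rewrite inE /pauli_elt /= expr0 scale1r pstate_stab.
Qed.

Lemma card_compl N (S : {set 'I_N}) : #|~: S| = (N - #|S|)%N.
Proof. have := cardsC S; rewrite card_ord => h; by rewrite -[X in (X - _)%N]h addKn. Qed.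

Lemma sum_compl N (S : {set 'I_N}) :
  \sum_(i < N) ((i \notin S)%:R : C) = (#|~: S|)%:R.
Proof.
rewrite -sum1_card natr_sum [RHS]big_mkcond /=; apply: eq_bigr => i _.
by rewrite inE; case: (i \in S).
Qed.

Lemma ev_tfim_pstate N (adj : rel 'I_N) g (S : {set 'I_N}) :
  expval (tfim adj g) (pstate S) = ((fcost adj g S)%:C)%C.
Proof.
rewrite expval_tfim /fcost rmorphB rmorphM !rmorphN !rmorph_nat; congr (- _ - _ * _).
  rewrite card_edges natr_sum; apply: eq_bigr => i _; rewrite natr_sum.
  by apply: eq_bigr => j /andP [hij _]; rewrite ev_pstate_ZZ // neq_ltn hij.
by under eq_bigr do rewrite ev_pstate_X; rewrite sum_compl.
Qed.

Lemma rhs_le_fcost N (adj : rel 'I_N) (g : R) (S : {set 'I_N}) :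
  rhs_min adj g <= fcost adj g S.
Proof.
have hn : (#|S| < N.+1)%N by rewrite ltnS; apply: leq_trans (max_card _) _; rewrite card_ord.
apply: (@bigmin_inf _ _ _ _ (Ordinal hn)) => //=.
rewrite /fcost -card_compl; apply: lerB => //; rewrite lerN2 ler_nat.
exact: (leq_bigmax_cond (P := fun T : {set 'I_N} => (#|T| <= #|S|)%N)).
Qed.

Lemma rhs_attained N (adj : rel 'I_N) (g : R) : 0 <= g ->
  exists S, fcost adj g S <= rhs_min adj g.
Proof.
move=> hg.
have [n hn] : exists n : 'I_N.+1,
    rhs_min adj g = - (edge_fun adj n)%:R - g * (N - n)%:R.
  rewrite /rhs_min; apply: (big_ind (fun x => exists n : 'I_N.+1,
      x = - (edge_fun adj n)%:R - g * (N - n)%:R)).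
  - by exists ord0; rewrite subn0.
  - move=> x y [n1 ->] [n2 ->]; rewrite minEle; case: ifP => _; by eexists.
  - by move=> i _; exists i.
case: (@arg_maxnP _ (set0 : {set 'I_N}) (fun S => (#|S| <= n)%N)
          (fun S => #|edges_in adj S|)); first by rewrite cards0.
move=> S hS hmax; exists S.
have hE : edge_fun adj n = #|edges_in adj S|.
  apply/eqP; rewrite eqn_leq (leq_bigmax_cond (P := fun T : {set 'I_N} => (#|T| <= n)%N)) //.
  by apply/andP; split => //; apply/bigmax_leqP.
rewrite hn /fcost hE card_compl; apply: lerB => //.
by apply: ler_wpM2l => //; rewrite ler_nat leq_sub2l.
Qed.

Lemma minimizer_opt N (adj : rel 'I_N) (g : R) (V : {set 'I_N}) : 0 <= g ->
  (forall S, fcost adj g V <= fcost adj g S) -> n_optimal adj #|V| V.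
Proof.
move=> hg hmin; split => //.
apply/eqP; rewrite eqn_leq (leq_bigmax_cond (P := fun T : {set 'I_N} => (#|T| <= #|V|)%N)) //.
apply/andP; split => //; apply/bigmax_leqP => S hS.
rewrite leqNgt; apply/negP => hlt.
have := hmin S; rewrite /fcost !card_compl; apply/negP; rewrite -ltNge.
apply: ltr_leB; first by rewrite ltrN2 ltr_nat.
by apply: ler_wpM2l => //; rewrite ler_nat leq_sub2l.
Qed.
End S.

Unset Implicit Arguments.
Set Strict Implicit.

Theorem mainTheorem6 (R : rcfType) (N : nat) (adj : rel 'I_N) (g : R) :
  simple_graph adj -> 0 <= g ->
  ((exists phi : 'cV[R[i]]_(2 ^ N),
       stabilizer_state phi /\ expval (tfim adj g) phi = ((rhs_min adj g)%:C)%C) /\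
   (forall phi : 'cV[R[i]]_(2 ^ N),
       stabilizer_state phi -> ((rhs_min adj g)%:C)%C <= expval (tfim adj g) phi)) /\
  (forall V : {set 'I_N},
     (forall S : {set 'I_N}, fcost adj g V <= fcost adj g S) ->
     n_optimal adj #|V| V).
Proof.
move=> _ hg; split; [split|].
- have [S hS] := rhs_attained adj hg.
  exists (pstate R S); split; first exact: pstate_stabilizer.
  rewrite ev_tfim_pstate; congr (_%:C)%C.
  by apply/le_anti; rewrite hS rhs_le_fcost.
- move=> phi hst; have [S hS] := lower_bound adj hg hst.
  by apply: le_trans hS; rewrite lecR rhs_le_fcost.
- by move=> V; apply: minimizer_opt.
Qed.
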